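(* Let $p$ be a binary-coded probability distribution and fix an integer $n\ge1$. Run the algorithm GenOpt described below on $p$. Let $B_n$ denote the first $n$ bits appended to $b$, and $C_n$ the number of random bits drawn up to and including the point when the $n$-th bit is appended. Then for all $s\in\{0,1\}^n$ and $\ell\ge0$, $\Pr(B_n=s,\,C_n=\ell)=2^{-\ell}\,\mathbf{1}\big[[p(s)]_\ell=1\big]$.
   Context: A binary-coded probability distribution is a map $p:\{0,1\}^*\to[0,1]$ with $p(\varepsilon)=1$ ($\varepsilon$ the empty string) and $p(b)=p(b0)+p(b1)$ for every finite binary string $b$. Every real $z\in[0,1]$ has a unique concise binary expansion $z=(z_0.z_1z_2\ldots)_2=\sum_{i\ge0}z_i2^{-i}$ not ending in an infinite string of 1s; write $[z]_i:=z_i$. Algorithm GenOpt: it maintains a string $b$ (initially empty) and a counter $\ell$ (initially $0$) of fair random bits drawn, and repeats forever the following round, which appends one bit to $b$: if $[p(b0)]_\ell=1$ and $[p(b1)]_\ell=0$, append $0$; else if $[p(b0)]_\ell=0$ and $[p(b1)]_\ell=1$, append $1$; otherwise repeat: draw a fair random bit $x$ and set $\ell\leftarrow\ell+1$; if $x=0$ and $[p(b0)]_\ell=1$, append $0$ and end the round; if $x=1$ and $[p(b1)]_\ell=1$, append $1$ and end the round. *)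

(* Defs.v *)
From HB Require Import structures.
From mathcomp Require Import all_boot all_order all_algebra.
From mathcomp Require Import reals.
Set Implicit Arguments. Unset Strict Implicit. Unset Printing Implicit Defensive.
Import Order.TTheory GRing.Theory Num.Theory.
Local Open Scope ring_scope.

(* Binary-coded probability distribution on finite binary strings (seq bool).
   b0 is [rcons b false], b1 is [rcons b true]; values lie in [0,1]. *)
Definition bcpd (R : realType) (p : seq bool -> R) : Prop :=
  p [::] = 1 /\
  (forall b, 0 <= p b <= 1) /\
  (forall b, p b = p (rcons b false) + p (rcons b true)).

(* [z]_i : i-th digit of the concise binary expansion z = sum_i z_i 2^-i
   (z in [0,1]); z_i = floor(2^i z) mod 2. *)
Definition digit (R : realType) (z : R) (i : nat) : bool :=
  ((Num.floor (z * 2 ^+ i) %% 2)%Z == 1%Z).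

(* Returns (appended bit, new counter, remaining bits), or None if the
   supply of bits xs is exhausted before the round ends. *)
Fixpoint draw (R : realType) (p : seq bool -> R) (b : seq bool) (l : nat)
    (xs : seq bool) : option (bool * nat * seq bool) :=
  match xs with
  | [::] => None
  | x :: xs' =>
      if ~~ x && digit (p (rcons b false)) l.+1 then Some (false, l.+1, xs')
      else if x && digit (p (rcons b true)) l.+1 then Some (true, l.+1, xs')
      else draw p b l.+1 xs'
  end.

Definition round (R : realType) (p : seq bool -> R) (b : seq bool) (l : nat)
    (xs : seq bool) : option (bool * nat * seq bool) :=
  if digit (p (rcons b false)) l && ~~ digit (p (rcons b true)) l
  then Some (false, l, xs)
  else if ~~ digit (p (rcons b false)) l && digit (p (rcons b true)) l
  then Some (true, l, xs)
  else draw p b l xs.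

(* First n rounds of GenOpt from b = empty, l = 0, fed with random bits xs.
   Returns (B_n, C_n, unused bits) or None if xs runs out. *)
Fixpoint run (R : realType) (p : seq bool -> R) (n : nat) (xs : seq bool)
    : option (seq bool * nat * seq bool) :=
  match n with
  | 0 => Some ([::], 0%N, xs)
  | n'.+1 =>
      match run p n' xs with
      | None => None
      | Some (b, l, r) =>
          match round p b l r with
          | None => None
          | Some (c, l', r') => Some (rcons b c, l', r')
          end
      end
  end.

(* Pr(B_n = s, C_n = l) when the random bits are i.i.d. fair: the event
   {B_n = s, C_n = l} is the cylinder set of those length-l prefixes xs on
   which the first n rounds finish using exactly all l bits and produce s;
   each such prefix has probability 2^-l. *)
Definition prob_BC (R : realType) (p : seq bool -> R) (n : nat)
    (s : seq bool) (l : nat) : R :=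
  #|[set xs : l.-tuple bool | run p n xs == Some (s, l, [::])]|%:R / 2 ^+ l.

(* Main.v *)
Require Import Defs.
From HB Require Import structures.
From mathcomp Require Import all_boot all_order all_algebra.
From mathcomp Require Import reals.
From mathcomp Require Import zify ring lra.
Set Implicit Arguments. Unset Strict Implicit. Unset Printing Implicit Defensive.
Import Order.TTheory GRing.Theory Num.Theory.

Section Run.
Variable R : realType.
Variable p : seq bool -> R.

Definition step (b : seq bool) (k : nat) (x : bool) : option (bool * nat * seq bool) :=
  if ~~ x && digit (p (rcons b false)) k.+1 then Some (false, k.+1, [::])
  else if x && digit (p (rcons b true)) k.+1 then Some (true, k.+1, [::])
  else None.

Lemma draw_ext b l xs ys c l' r : draw p b l xs = Some (c, l', r) ->
  draw p b l (xs ++ ys) = Some (c, l', r ++ ys).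
Proof.
elim: xs l => [|x xs IH] l //=.
case: ifP => _; first by case=> <- <- <-.
case: ifP => _; first by case=> <- <- <-.
exact: IH.
Qed.

Lemma draw_len b l xs c l' r : draw p b l xs = Some (c, l', r) ->
  (l' + size r = l + size xs)%N /\ (l < l')%N.
Proof.
elim: xs l => [|x xs IH] l //=.
case: ifP => _; first by case=> _ <- <-; split; lia.
case: ifP => _; first by case=> _ <- <-; split; lia.
move/IH => [H1 H2]; split; lia.
Qed.

Lemma draw_take b l xs c l' r : draw p b l xs = Some (c, l', r) ->
  draw p b l (take (l' - l) xs) = Some (c, l', [::]).
Proof.
elim: xs l => [|x xs IH] l //=.
case: ifP => H1.
  case=> <- <- _. by rewrite subSnn /= H1 take0.
case: ifP => H2.
  case=> <- <- _. by rewrite subSnn /= H1 H2 take0.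
move=> Hd. have [_ Hlt] := draw_len Hd.
have -> : (l' - l = (l' - l.+1).+1)%N by lia.
by rewrite /= H1 H2; apply: IH.
Qed.

Lemma draw_none_rcons b l xs x : draw p b l xs = None ->
  draw p b l (rcons xs x) = step b (l + size xs) x.
Proof.
elim: xs l => [|y xs IH] l /=.
  by rewrite addn0 /step; case: ifP => //; case: ifP.
case: ifP => // _; case: ifP => // _ Hd.
by rewrite IH // addSnnS.
Qed.

Lemma round_ext b l xs ys c l' r : round p b l xs = Some (c, l', r) ->
  round p b l (xs ++ ys) = Some (c, l', r ++ ys).
Proof.
rewrite /round; case: ifP => _; first by case=> <- <- <-.
case: ifP => _; first by case=> <- <- <-.
exact: draw_ext.
Qed.

Lemma round_len b l xs c l' r : round p b l xs = Some (c, l', r) ->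
  (l' + size r = l + size xs)%N /\ (l <= l')%N.
Proof.
rewrite /round; case: ifP => _; first by case=> _ <- <-.
case: ifP => _; first by case=> _ <- <-.
by move/draw_len => [? ?]; split => //; lia.
Qed.

Lemma round_take b l xs c l' r : round p b l xs = Some (c, l', r) ->
  round p b l (take (l' - l) xs) = Some (c, l', [::]).
Proof.
rewrite /round; case: ifP => H1; first by case=> <- <- _; rewrite subnn take0.
case: ifP => H2; first by case=> <- <- _; rewrite subnn take0.
exact: draw_take.
Qed.

Lemma round_none_rcons b l xs x : round p b l xs = None ->
  round p b l (rcons xs x) = step b (l + size xs) x.
Proof.
rewrite /round; case: ifP => // _; case: ifP => // _.
exact: draw_none_rcons.
Qed.

Lemma run_ext n xs ys b l r : run p n xs = Some (b, l, r) ->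
  run p n (xs ++ ys) = Some (b, l, r ++ ys).
Proof.
elim: n b l r => [|n IH] b l r /=; first by case=> <- <- <-.
case E: (run p n xs) => [[[b1 l1] r1]|] //.
rewrite (IH _ _ _ E).
case E2: (round p b1 l1 r1) => [[[c l2] r2]|] //.
by rewrite (round_ext _ E2); case=> <- <- <-.
Qed.

Lemma run_len n xs b l r : run p n xs = Some (b, l, r) ->
  (l + size r = size xs)%N.
Proof.
elim: n b l r => [|n IH] b l r /=; first by case=> _ <- <-.
case E: (run p n xs) => [[[b1 l1] r1]|] //.
case E2: (round p b1 l1 r1) => [[[c l2] r2]|] // [_ <- <-].
have := IH _ _ _ E. have [] := round_len E2. lia.
Qed.

Lemma run_take n xs b l r : run p n xs = Some (b, l, r) ->
  run p n (take l xs) = Some (b, l, [::]).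
Proof.
elim: n b l r => [|n IH] b l r /=; first by case=> <- <- _; rewrite take0.
case E: (run p n xs) => [[[b1 l1] r1]|] //.
case E2: (round p b1 l1 r1) => [[[c l2] r2]|] // [<- <- _].
have Ht := IH _ _ _ E.
have Hr1 : r1 = drop l1 xs.
  have := run_ext (drop l1 xs) Ht. rewrite cat_take_drop E /=. by case.
have [_ Hle] := round_len E2.
have -> : l2 = (l1 + (l2 - l1))%N by lia.
rewrite takeD (run_ext _ Ht) /= -Hr1 (round_take E2).
by rewrite addnC subnK.
Qed.

Lemma run_rcons n ys x b l r : run p n ys = Some (b, l, r) ->
  run p n (rcons ys x) = Some (b, l, rcons r x).
Proof. by move=> H; rewrite -!cats1; apply: run_ext. Qed.

Lemma run_rcons_new n ys x b l r : run p n (rcons ys x) = Some (b, l, r) ->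
  (l = (size ys).+1 /\ r = [::]) \/ exists r', run p n ys = Some (b, l, r').
Proof.
move=> H; have Hl := run_len H; rewrite size_rcons in Hl.
case: r H Hl => [|y r] H Hl; first by left; split => //; move: Hl => /=; lia.
right; exists (drop l ys).
have Ht := run_take H.
rewrite -cats1 takel_cat in Ht; last by move: Hl => /=; lia.
by have := run_ext (drop l ys) Ht; rewrite cat_take_drop.
Qed.

End Run.

Section Stat.
Variable R : realType.
Variable p : seq bool -> R.

Definition stat n b xs : option (nat * seq bool) :=
  match run p n xs with
  | Some (b', l, r) => if b' == b then Some (l, r) else None
  | None => None
  end.

Lemma S1 n b ys x l r : stat n b ys = Some (l, r) -> stat n b (rcons ys x) = Some (l, rcons r x).
Proof.
rewrite /stat; case E: (run p n ys) => [[[b' l'] r']|] //.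
by rewrite (run_rcons x E); case: eqP => // _ [-> ->].
Qed.

Lemma S3 n b ys l r : stat n b ys = Some (l, r) -> (l + size r = size ys)%N.
Proof.
rewrite /stat; case E: (run p n ys) => [[[b' l'] r']|] //.
by case: eqP => // _ [<- <-]; apply: run_len E.
Qed.

Lemma S2 n b ys x l r : stat n b (rcons ys x) = Some (l, r) ->
  (l = (size ys).+1 /\ r = [::]) \/ exists r', stat n b ys = Some (l, r').
Proof.
rewrite /stat; case E: (run p n (rcons ys x)) => [[[b' l'] r']|] //.
case: eqP => // Eb; subst b'; case=> <- <-.
case: (run_rcons_new E) => [|[r2 ->]]; first by left.
by right; exists r2; rewrite eqxx.
Qed.

Lemma neq_rcons (l k : nat) (r : seq bool) x :
  (Some (l, rcons r x) == Some (k, [::])) = false.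
Proof. by apply/eqP; case=> _ /eqP; rewrite -size_eq0 size_rcons. Qed.

Definition inB n b xs : bool := stat n b xs != None.
Definition atB n b j xs : bool := stat n b xs == Some (j, [::]).
Definition hc n b c xs : bool :=
  if stat n b xs is Some (l, r) then
    (if round p b l r is Some (c', _, _) then c' == c else false)
  else false.
Definition pend n b xs : bool :=
  if stat n b xs is Some (l, r) then round p b l r == None else false.
Definition dg b c k := digit (p (rcons b c)) k.
Definition sc b c k := dg b c k && ~~ dg b (~~ c) k.

Lemma round_nil b k : round p b k [::] =
  if sc b false k then Some (false, k, [::]) else
  if sc b true k then Some (true, k, [::]) else None.
Proof. rewrite /round /sc /dg /=. by case: (digit (p (rcons b false)) k); case: (digit (p (rcons b true)) k). Qed.

Lemma P1 n b ys x : (inB n b (rcons ys x) : nat) =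
   (inB n b ys + atB n b (size ys).+1 (rcons ys x))%N.
Proof.
rewrite /inB /atB.
case Hs: (stat n b ys) => [[l r]|].
  by rewrite (S1 x Hs) neq_rcons.
case Hs2: (stat n b (rcons ys x)) => [[l r]|] //.
case: (S2 Hs2) => [[-> ->]|[r' Hr']]; first by rewrite !eqxx.
by rewrite Hr' in Hs.
Qed.

Lemma P2 n b c ys x : (hc n b c (rcons ys x) : nat) =
   (hc n b c ys + pend n b ys * ((x == c) && dg b c (size ys).+1)
    + atB n b (size ys).+1 (rcons ys x) * sc b c (size ys).+1)%N.
Proof.
rewrite /hc /pend /atB.
case Hs: (stat n b ys) => [[l r]|].
  rewrite (S1 x Hs).
  rewrite neq_rcons.
  case Hr: (round p b l r) => [[[c' l'] r']|].
    by rewrite -cats1 (round_ext _ Hr) /= !mul0n !addn0.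
  rewrite (round_none_rcons _ Hr) (S3 Hs) /step /sc /dg ?eqxx ?mul0n ?mul1n ?addn0 ?add0n /=.
  by case: x; case: c => /=; case: (digit (p (rcons b false)) _); case: (digit (p (rcons b true)) _).
case Hs2: (stat n b (rcons ys x)) => [[l r]|] //.
case: (S2 Hs2) => [[-> ->]|[r' Hr']]; last by rewrite Hr' in Hs.
rewrite round_nil !eqxx /= mul1n.
by rewrite /sc /=; case: c; case: (dg b false _); case: (dg b true _).
Qed.

Lemma P3 n b ys x : (pend n b (rcons ys x) : nat) =
   (pend n b ys * ~~ dg b x (size ys).+1
    + atB n b (size ys).+1 (rcons ys x) * ~~ (sc b false (size ys).+1 || sc b true (size ys).+1))%N.
Proof.
rewrite /pend /atB.
case Hs: (stat n b ys) => [[l r]|].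
  rewrite (S1 x Hs).
  rewrite neq_rcons.
  case Hr: (round p b l r) => [[[c' l'] r']|].
    by rewrite -cats1 (round_ext _ Hr).
  rewrite (round_none_rcons _ Hr) (S3 Hs) /step /sc /dg ?eqxx ?mul0n ?mul1n ?addn0 ?add0n /=.
  by case: x => /=; case: (digit (p (rcons b false)) _); case: (digit (p (rcons b true)) _).
case Hs2: (stat n b (rcons ys x)) => [[l r]|] //.
case: (S2 Hs2) => [[-> ->]|[r' Hr']]; last by rewrite Hr' in Hs.
rewrite round_nil !eqxx /= mul1n.
by rewrite /sc /=; case: (dg b false _); case: (dg b true _).
Qed.

Lemma P0 n b : stat n b [::] != None -> stat n b [::] = Some (0%N, [::]).
Proof.
case Hs: (stat n b [::]) => [[l r]|] // _.
by move: (S3 Hs) => /= /eqP; rewrite addn_eq0 size_eq0 => /andP [/eqP -> /eqP ->].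
Qed.

Lemma hc0 n b c : (hc n b c [::] : nat) = (inB n b [::] * sc b c 0)%N.
Proof.
rewrite /hc /inB; case Hs: (stat n b [::]) => [[l r]|] //.
have := P0 (n:=n) (b:=b); rewrite Hs => /(_ isT) [-> ->].
rewrite round_nil /= mul1n.
by rewrite /sc /=; case: c; case: (dg b false _); case: (dg b true _).
Qed.

Lemma pend0 n b : (pend n b [::] : nat) = (inB n b [::] * ~~ (sc b false 0 || sc b true 0))%N.
Proof.
rewrite /pend /inB; case Hs: (stat n b [::]) => [[l r]|] //.
have := P0 (n:=n) (b:=b); rewrite Hs => /(_ isT) [-> ->].
rewrite round_nil /= mul1n.
by rewrite /sc /=; case: (dg b false _); case: (dg b true _).
Qed.

Lemma hc_inB n b c xs : hc n b c xs = inB (S n) (rcons b c) xs.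
Proof.
rewrite /hc /inB /stat /=.
case E: (run p n xs) => [[[b' l] r]|] //.
case: eqP => [<-|Hb]; case E2: (round p b' l r) => [[[c' l'] r']|] //.
  by rewrite eqseq_rcons eqxx /=; case: (c' == c).
by rewrite eqseq_rcons; move/eqP/negbTE: Hb => ->.
Qed.

End Stat.

Fixpoint allseq j : seq (seq bool) :=
  if j is j'.+1 then [seq rcons ys false | ys <- allseq j'] ++ [seq rcons ys true | ys <- allseq j']
  else [:: [::]].

Definition Cnt j (P : seq bool -> bool) : nat := \sum_(xs <- allseq j) (P xs : nat).

Lemma CntS j P : Cnt j.+1 P = \sum_(xs <- allseq j) (P (rcons xs false) + P (rcons xs true))%N.
Proof. by rewrite /Cnt /= big_cat !big_map big_split. Qed.

Lemma Cnt0 P : Cnt 0 P = P [::].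
Proof. by rewrite /Cnt /= big_seq1. Qed.

Lemma mem_allseq j xs : (xs \in allseq j) = (size xs == j).
Proof.
elim: j xs => [|j IH] xs; first by case: xs.
rewrite /= mem_cat; case/lastP: xs => [|ys y].
  apply/negP => /orP [] /mapP [z _ /eqP]; by rewrite eq_sym -size_eq0 size_rcons.
rewrite size_rcons eqSS -IH; apply/idP/idP.
  by case/orP => /mapP [z Hz /rcons_inj [-> _]].
by move=> H; case: y; apply/orP; [right|left]; apply/mapP; exists ys.
Qed.

Lemma uniq_allseq j : uniq (allseq j).
Proof.
elim: j => [|j IH] //=; rewrite cat_uniq !map_inj_uniq ?IH //=; try exact: rcons_injl.
rewrite andbT; apply/hasPn => z /mapP [ys _ ->]; apply/negP => /mapP [ys' _ /rcons_inj [_]] //.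
Qed.

Lemma card_Cnt l (P : seq bool -> bool) :
  #|[set xs : l.-tuple bool | P xs]| = Cnt l P.
Proof.
rewrite -sum1_card big_mkcond /=.
rewrite (eq_bigr (fun t : l.-tuple bool => (P t : nat))); last by move=> t _; rewrite in_set; case: (P t).
rewrite /Cnt -(big_map val xpredT (fun xs => (P xs : nat))).
apply: perm_big; apply: uniq_perm.
- rewrite map_inj_uniq ?index_enum_uniq //; exact: val_inj.
- exact: uniq_allseq.
move=> xs; rewrite mem_allseq; apply/mapP/idP.
  by case=> t _ ->; rewrite size_tuple.
by move=> /eqP H; exists (Tuple (introT eqP H)) => //; rewrite mem_index_enum.
Qed.

Lemma Cnt_true j : Cnt j (fun _ => true) = (2 ^ j)%N.
Proof.
elim: j => [|j IH]; first by rewrite Cnt0.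
rewrite CntS expnS -IH /Cnt big_distrr /=; apply: eq_bigr => ? _; lia.
Qed.

Section Reals.
Variable R : realType.
Local Open Scope ring_scope.

Definition F (z : R) (j : nat) : int := Num.floor (z * 2 ^+ j).

Lemma intr2 : ((2 : int)%:~R : R) = 2.
Proof. by []. Qed.

Lemma R1 z j : F z j.+1 = F z j * 2 + ((digit z j.+1 : nat) : int).
Proof.
rewrite /F /digit exprSr mulrA.
set y := z * 2 ^+ j.
set k := Num.floor y.
have Hk1 := floor_le y. have Hk2 := floorD1_gt y.
rewrite -/k rmorphD /= in Hk2. rewrite -/k in Hk1.
have H1 : k * 2 <= Num.floor (y * 2).
  rewrite floor_ge_int rmorphM /= intr2. lra.
have H2 : Num.floor (y * 2) < k * 2 + 2.
  rewrite floor_lt_int rmorphD rmorphM /= intr2. lra.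
have : Num.floor (y * 2) = k * 2 \/ Num.floor (y * 2) = k * 2 + 1 by lia.
case=> ->.
  by rewrite modzMl addr0.
by rewrite modzMDl.
Qed.

Lemma R2 x y j : 0 <= F (x + y) j - F x j - F y j <= 1.
Proof.
rewrite /F mulrDl.
set a := x * 2 ^+ j. set c := y * 2 ^+ j.
have Ha1 := floor_le a. have Ha2 := floorD1_gt a.
have Hc1 := floor_le c. have Hc2 := floorD1_gt c.
rewrite rmorphD /= in Ha2. rewrite rmorphD /= in Hc2.
have H1 : Num.floor a + Num.floor c <= Num.floor (a + c).
  rewrite floor_ge_int rmorphD /=. lra.
have H2 : Num.floor (a + c) < Num.floor a + Num.floor c + 2.
  rewrite floor_lt_int !rmorphD /=. lra.
move: H1 H2; move: (Num.floor (a + c)) (Num.floor a) (Num.floor c) => u v w H1 H2.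
apply/andP; split; lia.
Qed.

Lemma R3 z : 0 <= z <= 1 -> F z 0 = ((digit z 0 : nat) : int).
Proof.
move=> /andP [H0 H1]; rewrite /F /digit expr0 mulr1.
have [->|Hne] := eqVneq z 1; first by rewrite floor1.
have -> : Num.floor z = 0.
  apply/eqP; rewrite floor_eq /= rmorphD /=. 
  have : z < 1 by rewrite lt_neqAle Hne H1.
  rewrite add0r. move=> ?; apply/andP; split => //.
by [].
Qed.

Lemma R4 j : F 1 j = ((2 ^ j)%N : int).
Proof.
rewrite /F mul1r.
have -> : (2 : R) ^+ j = (((2 ^ j)%N : int))%:~R.
  by rewrite -natrX /=.
by rewrite intrKfloor.
Qed.

End Reals.

Section Main.
Variable R : realType.
Variable p : seq bool -> R.
Hypothesis hp : bcpd p.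

Definition G n b j := Cnt j (inB p n b).

Lemma GS n b j : G n b j.+1 = (2 * G n b j + Cnt j.+1 (atB p n b j.+1))%N.
Proof.
rewrite /G !CntS /Cnt big_distrr -big_split /=.
apply: eq_big_seq => ys; rewrite mem_allseq => /eqP Hs.
rewrite !P1 Hs. ring.
Qed.

Lemma HS n b c j : Cnt j.+1 (hc p n b c) =
  (2 * Cnt j (hc p n b c) + Cnt j (pend p n b) * dg p b c j.+1
   + Cnt j.+1 (atB p n b j.+1) * sc p b c j.+1)%N.
Proof.
rewrite !CntS /Cnt !big_distrl big_distrr -!big_split /=.
apply: eq_big_seq => ys; rewrite mem_allseq => /eqP Hs.
rewrite !P2 Hs; case: c => /=; ring.
Qed.

Lemma PS n b j : Cnt j.+1 (pend p n b) =
  (Cnt j (pend p n b) * (~~ dg p b false j.+1 + ~~ dg p b true j.+1)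
   + Cnt j.+1 (atB p n b j.+1) * ~~ (sc p b false j.+1 || sc p b true j.+1))%N.
Proof.
rewrite !CntS /Cnt !big_distrl ?big_distrr -!big_split /=.
apply: eq_big_seq => ys; rewrite mem_allseq => /eqP Hs.
rewrite !P3 Hs; ring.
Qed.

Lemma hadd b j : (0 <= F (p b) j - F (p (rcons b false)) j - F (p (rcons b true)) j <= 1)%R.
Proof. by case: hp => _ [_ ->]; apply: R2. Qed.

Lemma hR3 b : F (p b) 0 = ((digit (p b) 0 : nat) : int).
Proof. by case: hp => _ [H _]; apply: R3. Qed.

Lemma inner n b (IHG : forall j, (G n b j : int) = F (p b) j) : forall j,
  (Cnt j (hc p n b false) : int) = F (p (rcons b false)) j /\  (Cnt j (hc p n b true) : int) = F (p (rcons b true)) j /\  (Cnt j (pend p n b) : int) = (F (p b) j - F (p (rcons b false)) j - F (p (rcons b true)) j)%R.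
Proof.
elim => [|j [IH0 [IH1 IHP]]].
  rewrite !Cnt0 !hc0 pend0 !hR3.
  have := IHG 0; rewrite /G Cnt0 hR3.
  have := hadd b 0; rewrite !hR3 /sc /dg.
  case: (inB p n b [::]); case: (digit (p b) 0); case: (digit (p (rcons b false)) 0);
    case: (digit (p (rcons b true)) 0) => /=; lia.
have HN : (Cnt j.+1 (atB p n b j.+1) : int) = ((digit (p b) j.+1 : nat) : int).
  have := IHG j.+1; have := IHG j; rewrite GS R1. lia.
rewrite HS HS PS.
have := hadd b j; have := hadd b j.+1.
rewrite !R1.
move: HN IH0 IH1 IHP; rewrite /sc /dg.
move: (Cnt j.+1 (atB p n b j.+1)) (Cnt j (hc p n b false)) (Cnt j (hc p n b true)) (Cnt j (pend p n b)).
move: (F (p b) j) (F (p (rcons b false)) j) (F (p (rcons b true)) j).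
case: (digit (p b) j.+1); case: (digit (p (rcons b false)) j.+1);
    case: (digit (p (rcons b true)) j.+1) => /=; lia.
Qed.

Lemma mainG n : forall b, size b = n -> forall j, (G n b j : int) = F (p b) j.
Proof.
elim: n => [|n IHn] b.
  move/eqP; rewrite size_eq0 => /eqP -> j.
  have -> : G 0 [::] j = Cnt j (fun _ => true).
    by apply: eq_bigr => xs _; rewrite /inB /stat /=.
  by case: hp => -> _; rewrite Cnt_true R4.
case/lastP: b => [//|b c]; rewrite size_rcons => [[Hs]] j.
have -> : G n.+1 (rcons b c) j = Cnt j (hc p n b c).
  by apply: eq_bigr => xs _; rewrite hc_inB.
have := inner (IHn b Hs) j.
by case: c => [[_ [-> _]]|[-> _]].
Qed.

End Main.

Lemma final_count (R : realType) (p : seq bool -> R) (hp : bcpd p) n (s : seq bool) l :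
  size s = n ->
  #|[set xs : l.-tuple bool | run p n xs == Some (s, l, [::])]| = (digit (p s) l : nat).
Proof.
move=> Hs; rewrite (@card_Cnt l (fun xs => run p n xs == Some (s, l, [::]))).
have -> : Cnt l (fun xs => run p n xs == Some (s, l, [::])) = Cnt l (atB p n s l).
  apply: eq_bigr => xs _; congr (nat_of_bool _); rewrite /atB /stat.
  case: (run p n xs) => [[[b' l'] r']|] //.
  case: (eqVneq b' s) => [->|Hb].
    by apply/eqP/eqP => -[-> ->].
  case: eqP => // -[] E; by rewrite E eqxx in Hb.
apply/eqP; rewrite -eqz_nat; apply/eqP.
case: l => [|j].
  rewrite Cnt0 -(hR3 hp) -(mainG hp Hs) /G Cnt0 /atB /inB.
  case Hst: (stat p n s [::]) => [[l r]|] //.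
  have := P0 (p := p) (n := n) (b := s); rewrite Hst => /(_ isT) ->.
  by rewrite eqxx.
have := mainG hp Hs j.+1; have := mainG hp Hs j; rewrite GS R1.
rewrite !natz. lia.
Qed.

Local Open Scope ring_scope.

Theorem theoremC4 (R : realType) (p : seq bool -> R) (hp : bcpd p)
    (n : nat) (hn : (1 <= n)%N) (s : n.-tuple bool) (l : nat) :
  prob_BC p n s l = (2 ^+ l)^-1 * (if digit (p s) l then 1 else 0).
Proof.
rewrite /prob_BC (final_count hp) ?size_tuple //.
by case: (digit (p s) l); rewrite /= ?mul0r ?mulr0 ?mulr1 ?mul1r.
Qed.
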